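(* Let $k$ be a field of characteristic $0$, $n\geq3$, and let $\phi$ be a quadratic form over $k$ in $n-1$ variables such that $\psi=\langle1\rangle\perp(-\phi)$ is a regular anisotropic form. Let $Q^\psi\subset\mathbb A^n_k$ be the hypersurface $x_1^2-\phi(x_2,\dots,x_n)-1=0$. Let $(R,m,\kappa)$ be a discrete valuation ring containing $k$, with fraction field $K$ and valuation $v$. Let $f\in Q^\psi(K)$ with $f_i=f^*(x_i)$, and suppose $\phi_\kappa$ is anisotropic. (1) If $f$ lifts to $Q^\psi({\rm Spec}\,R)$, then both $v(f_1-1)$ and $v(f_1+1)$ are even. (2) If $f$ does not lift to $Q^\psi({\rm Spec}\,R)$, then $v(f_1)<0$ and $v(f_1)=\min\{v(f_2),\dots,v(f_n)\}$.
   Context: $\phi_\kappa$ is the base change of $\phi$ to the residue field $\kappa$; $\langle1\rangle$ is the form $x^2$ and $\perp$ the orthogonal sum. *)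

(* Defs.v *)
From HB Require Import structures.
From mathcomp Require Import all_boot all_order all_algebra.
Set Implicit Arguments. Unset Strict Implicit. Unset Printing Implicit Defensive.
Import Order.TTheory GRing.Theory Num.Theory.
Local Open Scope ring_scope.

Definition qform (R : comNzRingType) (m : nat) (A : 'M[R]_m) (x : 'rV[R]_m) : R :=
  (x *m A *m x^T) 0 0.

Definition anisotropic (R : comNzRingType) (m : nat) (A : 'M[R]_m) : Prop :=
  forall x : 'rV[R]_m, qform A x = 0 -> x = 0.

Definition regular (R : comNzRingType) (m : nat) (A : 'M[R]_m) : Prop :=
  \det A != 0.

(* Gram matrix of psi = <1> _|_ (-phi), in the variables (x_1, x_2..x_n). *)
Definition psi_mx (R : comNzRingType) (m : nat) (A : 'M[R]_m) : 'M[R]_(1 + m) :=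
  block_mx (1%:M : 'M[R]_1) 0 0 (- A).

(* A normalized discrete valuation on the field K, given by its values on K^x
   (the value of v at 0 is irrelevant; v(0) = +oo by convention). *)
Record dvaluation (K : fieldType) (v : K -> int) : Prop := {
  dv_mul : forall x y : K, x != 0 -> y != 0 -> v (x * y) = v x + v y;
  dv_add : forall x y : K, x != 0 -> y != 0 -> x + y != 0 ->
             Num.min (v x) (v y) <= v (x + y);
  dv_unif : exists p : K, p != 0 /\ v p = 1 }.

Definition inR (K : fieldType) (v : K -> int) (x : K) : bool := (x == 0) || (0 <= v x).
Definition inM (K : fieldType) (v : K -> int) (x : K) : bool := (x == 0) || (0 < v x).

(* phi_kappa anisotropic: if x in R^m reduces to a zero of phi_kappa,
   i.e. phi(x) in m, then x reduces to 0, i.e. all x_i in m. *)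
Definition residue_anisotropic (k K : fieldType) (iota : {rmorphism k -> K})
    (v : K -> int) (m : nat) (A : 'M[k]_m) : Prop :=
  forall x : 'rV[K]_m, (forall i, inR v (x 0 i)) ->
    inM v (qform (map_mx iota A) x) -> forall i, inM v (x 0 i).

(* Main.v *)
Require Import Defs.
From HB Require Import structures.
From mathcomp Require Import all_boot all_order all_algebra zify ring.
Import Order.TTheory GRing.Theory Num.Theory.
Local Open Scope ring_scope.
Set Implicit Arguments.

Lemma qformE (K : fieldType) m (B : 'M[K]_m) x :
  qform B x = \sum_j (\sum_k x 0 k * B k j) * x 0 j.
Proof. rewrite /qform !mxE; apply: eq_bigr => j _; rewrite !mxE; congr (_ * _).
Qed.

Lemma qformZ (K : fieldType) m (B : 'M[K]_m) x c :
  qform B (c *: x) = c ^+ 2 * qform B x.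
Proof.
rewrite !qformE big_distrr; apply: eq_bigr => j _ /=.
have -> : \sum_k (c *: x) 0 k * B k j = c * \sum_k x 0 k * B k j.
  by rewrite big_distrr; apply: eq_bigr => k _; rewrite mxE /= mulrA.
rewrite mxE expr2; rewrite !mulrA; congr (_ * _); rewrite -!mulrA; congr (_ * _); exact: mulrC.
Qed.

Lemma qform0 (K : fieldType) m (B : 'M[K]_m) : qform B 0 = 0.
Proof. by rewrite /qform !mul0mx mxE. Qed.

Lemma v1 (K : fieldType) (v : K -> int) (hv : dvaluation v) : v 1 = 0.
Proof. have := dv_mul hv (oner_neq0 K) (oner_neq0 K); rewrite mulr1 => h.
by apply: (addrI (v 1)); rewrite addr0 -h. Qed.

Lemma vN1 (K : fieldType) (v : K -> int) (hv : dvaluation v) : v (-1) = 0.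
Proof.
have h : (-1 : K) != 0 by rewrite oppr_eq0 oner_neq0.
have := dv_mul hv h h; rewrite mulrNN mulr1 (v1 hv) => h2.
move: h2; set a := v (-1); lia. Qed.

Lemma vN (K : fieldType) (v : K -> int) (hv : dvaluation v) x :
  x != 0 -> v (- x) = v x.
Proof.
move=> x0; have h : (-1 : K) != 0 by rewrite oppr_eq0 oner_neq0.
by rewrite -mulN1r (dv_mul hv h x0) (vN1 hv) add0r.
Qed.

Lemma vV (K : fieldType) (v : K -> int) (hv : dvaluation v) x :
  x != 0 -> v (x^-1) = - v x.
Proof.
move=> x0; have xi : x^-1 != 0 by rewrite invr_eq0.
have := dv_mul hv x0 xi; rewrite mulfV // (v1 hv) => h.
apply/eqP; rewrite -subr_eq0 opprK addrC -h //.
Qed.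

Lemma vXn (K : fieldType) (v : K -> int) (hv : dvaluation v) x n :
  x != 0 -> v (x ^+ n) = n%:Z * v x.
Proof.
move=> x0; elim: n => [|n IH]; first by rewrite expr0 (v1 hv) mul0r.
rewrite exprS (dv_mul hv x0) ?expf_neq0 // IH.
by rewrite intS mulrDl mul1r.
Qed.

Lemma vc (K : fieldType) (v : K -> int) (hv : dvaluation v) (t : int) :
  exists c, c != 0 /\ v c = t.
Proof.
have [p [p0 vp]] := dv_unif hv.
case: t => n.
  by exists (p ^+ n); rewrite expf_neq0 // (vXn hv) // vp mulr1.
exists ((p ^+ n.+1)^-1); rewrite invr_eq0 expf_neq0 // (vV hv) ?expf_neq0 //.
by rewrite (vXn hv) // vp mulr1 NegzE.
Qed.

Lemma inR0 (K : fieldType) (v : K -> int) : inR v 0.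
Proof. by rewrite /inR eqxx. Qed.

Lemma inR1 (K : fieldType) (v : K -> int) (hv : dvaluation v) : inR v 1.
Proof. by rewrite /inR (v1 hv) lexx orbT. Qed.

Lemma inRD (K : fieldType) (v : K -> int) (hv : dvaluation v) x y :
  inR v x -> inR v y -> inR v (x + y).
Proof.
have [->|x0] := eqVneq x 0; first by rewrite add0r.
have [->|y0] := eqVneq y 0; first by rewrite addr0.
rewrite /inR; have [->|s0] := eqVneq (x + y) 0; first by move=> _ _.
rewrite (negbTE x0) (negbTE y0) /= => hx hy; apply: le_trans (dv_add hv x0 y0 s0).
by rewrite le_min hx hy.
Qed.

Lemma inRM (K : fieldType) (v : K -> int) (hv : dvaluation v) x y :
  inR v x -> inR v y -> inR v (x * y).
Proof.
have [->|x0] := eqVneq x 0; first by rewrite mul0r inR0.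
have [->|y0] := eqVneq y 0; first by rewrite mulr0 inR0.
rewrite /inR (negbTE x0) (negbTE y0) /= => hx hy; by rewrite (dv_mul hv x0 y0) addr_ge0 ?orbT.
Qed.

Lemma inRN (K : fieldType) (v : K -> int) (hv : dvaluation v) x :
  inR v x -> inR v (- x).
Proof.
have [->|x0] := eqVneq x 0; first by rewrite oppr0.
rewrite /inR (negbTE x0) /=.
by rewrite (vN hv x x0) oppr_eq0 (negbTE x0).
Qed.

Lemma vstrict (K : fieldType) (v : K -> int) (hv : dvaluation v) x y :
  x != 0 -> y != 0 -> v x < v y -> x + y != 0 /\ v (x + y) = v x.
Proof.
move=> x0 y0 h.
have s0 : x + y != 0.
  apply/negP; rewrite addr_eq0 => /eqP ex; move: h; rewrite ex (vN hv y y0).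
  by rewrite ltxx.
split => //.
have h1 := dv_add hv x0 y0 s0; rewrite (min_l (ltW h)) in h1.
have yn : - y != 0 by rewrite oppr_eq0.
have x0' : (x + y) + - y != 0 by rewrite addrK.
have := dv_add hv s0 yn x0'; rewrite addrK (vN hv y y0) ge_min.
case/orP => h2; first by apply/eqP; rewrite eq_le h1 h2.
by move: (lt_le_trans h h2); rewrite ltxx.
Qed.

Lemma inR_sum (K : fieldType) (v : K -> int) (hv : dvaluation v) (I : finType)
  (F : I -> K) : (forall i, inR v (F i)) -> inR v (\sum_i F i).
Proof.
move=> h; apply: (big_ind (inR v)); [exact: inR0 | exact: inRD | by move=> i _].
Qed.

Lemma qform_inR (k K : fieldType) (iota : {rmorphism k -> K}) (v : K -> int)
  (hv : dvaluation v) m (A : 'M[k]_m)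
  (hc : forall c : k, c != 0 -> 0 <= v (iota c)) (x : 'rV[K]_m) :
  (forall i, inR v (x 0 i)) -> inR v (qform (map_mx iota A) x).
Proof.
move=> hx; rewrite qformE; apply: inR_sum => // j; apply: inRM => //.
apply: inR_sum => // l; apply: inRM => //.
rewrite mxE /inR; have [->|a0] := eqVneq (A l j) 0; first by rewrite rmorph0 eqxx.
by rewrite hc // orbT.
Qed.

Lemma key (k K : fieldType) (iota : {rmorphism k -> K}) (v : K -> int)
  (hv : dvaluation v) m (A : 'M[k]_m)
  (hc : forall c : k, c != 0 -> 0 <= v (iota c))
  (hres : residue_anisotropic iota v A) (x : 'rV[K]_m) :
  x != 0 ->
  exists i, [/\ x 0 i != 0, (forall j, x 0 j != 0 -> v (x 0 i) <= v (x 0 j)),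
     qform (map_mx iota A) x != 0 &
     v (qform (map_mx iota A) x) = v (x 0 i) + v (x 0 i)].
Proof.
move=> xn0.
have [i0 hi0] : exists i, x 0 i != 0.
  case: (pickP (fun i => x 0 i != 0)) => [i hi|h]; first by exists i.
  case/negP: xn0; apply/eqP/rowP => j; rewrite !mxE.
  by move: (h j) => /negbFE/eqP.
case: (@arg_minP _ _ _ i0 (fun i => x 0 i != 0) (fun i => v (x 0 i)) hi0) => i hi hmin.
exists i.
set t := v (x 0 i).
have [c [c0 vct]] := vc hv (- t).
set B := map_mx iota A.
set y := c *: x.
have yR : forall j, inR v (y 0 j).
  move=> j; rewrite /y mxE /inR.
  have [->|xj] := eqVneq (x 0 j) 0; first by rewrite mulr0 eqxx.
  apply/orP; right; rewrite (dv_mul hv c0 xj) vct addrC subr_ge0; exact: hmin.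
have qR : inR v (qform B y) by apply: qform_inR.
have yi : ~~ inM v (y 0 i).
  by rewrite /inM /y mxE negb_or mulf_eq0 negb_or c0 hi /= (dv_mul hv c0 hi) vct addNr ltxx.
have qM : ~~ inM v (qform B y).
  by apply/negP => hq; move: yi; rewrite (hres y yR hq i).
move: qM qR; rewrite /inM /inR negb_or => /andP [qn0 qpos].
rewrite (negbTE qn0) /= => qge.
have q0 : v (qform B y) = 0 by apply/eqP; rewrite eq_le qge andbT leNgt.
rewrite /y qformZ in qn0 q0.
have c2 : c ^+ 2 != 0 by rewrite expf_neq0.
have qxn0 : qform B x != 0 by move: qn0; rewrite mulf_eq0 negb_or => /andP [].
split => //.
move: q0; rewrite (dv_mul hv c2 qxn0) (vXn hv) // vct.
set a := v (qform B x); clearbody t a; lia.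
Qed.

Lemma odd_dbl (t : int) : ~~ odd (absz (t + t)).
Proof. have -> : t + t = t * 2 by lia. by rewrite abszM oddM andbF. Qed.

Lemma v2 (k K : fieldType) (iota : {rmorphism k -> K}) (v : K -> int)
  (hv : dvaluation v) (hch : [pchar k] =i pred0)
  (hc : forall c : k, c != 0 -> 0 <= v (iota c)) :
  (2%:R : K) != 0 /\ v 2%:R = 0.
Proof.
have h2 : (2%:R : k) != 0 by move/pcharf0P: hch => ->.
have h2' : (2%:R : K) != 0 by rewrite -(rmorph_nat iota) fmorph_eq0.
split => //.
have a := hc _ h2; have b := hc _ (invr_neq0 h2).
rewrite fmorphV rmorph_nat (vV hv) // in b; rewrite rmorph_nat in a.
apply/eqP; rewrite eq_le a andbT; by rewrite oppr_ge0 in b.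
Qed.

Unset Implicit Arguments.

Theorem lemma4p11 (k : fieldType) (m : nat) (A : 'M[k]_m)
    (K : fieldType) (iota : {rmorphism k -> K}) (v : K -> int)
    (f1 : K) (g : 'rV[K]_m) :
  [pchar k] =i pred0 ->
  (2 <= m)%N ->
  A^T = A ->
  regular (psi_mx A) ->
  anisotropic (psi_mx A) ->
  dvaluation v ->
  (forall c : k, c != 0 -> 0 <= v (iota c)) ->
  f1 ^+ 2 - qform (map_mx iota A) g - 1 = 0 ->
  residue_anisotropic iota v A ->
  ((inR v f1 /\ (forall i, inR v (g 0 i))) ->
     (f1 - 1 != 0 -> ~~ odd (absz (v (f1 - 1)))) /\
     (f1 + 1 != 0 -> ~~ odd (absz (v (f1 + 1))))) /\
  (~ (inR v f1 /\ (forall i, inR v (g 0 i))) ->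
     [/\ f1 != 0, v f1 < 0,
         (exists i, g 0 i != 0 /\ v (g 0 i) = v f1) &
         (forall i, g 0 i != 0 -> v f1 <= v (g 0 i))]).
Proof.
move=> hch hm hAT hreg hani hv hc heq hres.
have [h2 vtwo] := v2 iota hv hch hc.
set B := map_mx iota A in heq *.
set q := qform B g in heq *.
have hq : q = f1 ^+ 2 - 1.
  have -> : q = f1 ^+ 2 - 1 - (f1 ^+ 2 - q - 1) by ring.
  by rewrite heq subr0.
have hfac : (f1 - 1) * (f1 + 1) = q by rewrite hq; ring.
have g0q : g = 0 -> q = 0 by move=> e; rewrite /q e qform0.
have f1pm : g = 0 -> f1 = 1 \/ f1 = -1.
  move=> /g0q q0; move: hfac; rewrite q0 => /eqP; rewrite mulf_eq0.
  case/orP => /eqP e; [left | right].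
    by apply/eqP; rewrite -subr_eq0 e.
  by apply/eqP; rewrite -addr_eq0 e.
split.
  case=> f1R gR.
  have [g0|gn0] := eqVneq g 0.
    have n2 : v (- 2%:R) = 0 by rewrite (vN hv) // vtwo.
    case: (f1pm g0) => ->; split => hne.
    - by rewrite subrr eqxx in hne.
    - by rewrite vtwo.
    - by rewrite -opprD n2.
    - by rewrite addNr eqxx in hne.
  have [i [hi hmin qn0 vq]] := key hv hc hres g gn0.
  rewrite -/B -/q in qn0 vq.
  move: qn0; rewrite -hfac mulf_eq0 negb_or => /andP [a0 b0].
  have aR : inR v (f1 - 1) by apply: inRD => //; apply: inRN => //; apply: inR1.
  have bR : inR v (f1 + 1) by apply: inRD => //; apply: inR1.
  move: aR bR; rewrite /inR (negbTE a0) (negbTE b0) /= => aR bR.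
  have vs : v (f1 - 1) + v (f1 + 1) = v (g 0 i) + v (g 0 i).
    by rewrite -vq -hfac (dv_mul hv a0 b0).
  have na0 : - (f1 - 1) != 0 by rewrite oppr_eq0.
  have s2 : (f1 + 1) + - (f1 - 1) = 2%:R by rewrite opprB addrC addrA subrK.
  have s20 : (f1 + 1) + - (f1 - 1) != 0 by rewrite s2.
  have := dv_add hv b0 na0 s20; rewrite s2 vtwo (vN hv) // ge_min.
  move=> hor.
  have : v (f1 - 1) = 0 \/ v (f1 + 1) = 0.
    case/orP: hor => h; [right | left]; apply/eqP; by rewrite eq_le h.
  case=> e; split => _.
  - by rewrite e.
  - by move: vs; rewrite e add0r => ->; exact: odd_dbl.
  - by move: vs; rewrite e addr0 => ->; exact: odd_dbl.
  - by rewrite e.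
move=> hnR.
have gn0 : g != 0.
  apply/eqP => g0; apply: hnR; split.
    case: (f1pm g0) => ->; first exact: inR1.
    by apply: inRN => //; apply: inR1.
  by move=> i; rewrite g0 mxE inR0.
have [i [hi hmin qn0 vq]] := key hv hc hres g gn0.
rewrite -/B -/q in qn0 vq.
have f2 : f1 ^+ 2 = q + 1 by rewrite hq subrK.
have tneg : v (g 0 i) < 0.
  rewrite ltNge; apply/negP => t0; apply: hnR.
  have gR : forall j, inR v (g 0 j).
    move=> j; rewrite /inR; have [//|gj] := eqVneq (g 0 j) 0.
    by rewrite /= (le_trans t0 (hmin j gj)).
  split => //.
  have f2R : inR v (f1 ^+ 2) by rewrite f2; apply: inRD => //;
    [apply: qform_inR | apply: inR1].
  rewrite /inR; have [//|f0] := eqVneq f1 0.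
  rewrite /= leNgt; apply/negP => neg.
  move: f2R; rewrite /inR expf_eq0 /= (negbTE f0) /= (vXn hv) //.
  move: neg; set a := v f1; clearbody a; lia.
have vq1 : v q < v 1.
  by rewrite (v1 hv) vq; move: tneg; set a := v (g 0 i); clearbody a; lia.
have [s0 vs] := vstrict hv q 1 qn0 (oner_neq0 K) vq1.
rewrite -f2 in s0 vs.
have f0 : f1 != 0 by apply: contraNneq s0 => ->; rewrite expr0n.
have ef : v f1 = v (g 0 i).
  move: vs; rewrite (vXn hv) // vq.
  set a := v f1; set b := v (g 0 i); clearbody a b; lia.
split => //.
- by rewrite ef.
- by exists i; split.
- by move=> j gj; rewrite ef; apply: hmin.
Qed.
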